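(* Let $\mathcal{G}$ be a network with non-monitor set $N$ and set of measurement paths $P$, and let $S\subseteq N$ be nonempty. Then $\Omega(S)=\min_{v\in S}\Omega(v)$.
   Context: $\mathcal{G}$ is a finite connected undirected graph whose node set is partitioned into monitors $M$ and non-monitors $N$; $P$ is an arbitrary set of measurement paths (each a sequence of nodes of $\mathcal{G}$). A failure set is any $F\subseteq N$; a path fails iff it traverses a node of $F$. $P_F$ is the set of paths in $P$ traversing at least one node of $F$; $F_1,F_2$ are distinguishable iff $P_{F_1}\ne P_{F_2}$. For $S\subseteq N$ and integer $k\ge0$, $S$ is $k$-identifiable if any two failure sets $F_1,F_2$ with $|F_1|,|F_2|\le k$ and $F_1\cap S\ne F_2\cap S$ are distinguishable. $\Omega(S)$ is the maximum $k\in\{0,\dots,|N|\}$ such that $S$ is $k$-identifiable, and $\Omega(v):=\Omega(\{v\})$. *)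

(* Defs.v *)
From mathcomp Require Import all_boot.
From mathcomp Require Import boolp.
Set Implicit Arguments. Unset Strict Implicit. Unset Printing Implicit Defensive.

Section Network.
Variable T : finType.

Definition path_fails (F : {set T}) (p : seq T) : bool := has (mem F) p.

Definition failed_paths (P : seq T -> Prop) (F : {set T}) : seq T -> Prop :=
  fun p => P p /\ path_fails F p.

Definition distinguishable (P : seq T -> Prop) (F1 F2 : {set T}) : Prop :=
  failed_paths P F1 <> failed_paths P F2.

Definition k_identifiable (N : {set T}) (P : seq T -> Prop) (S : {set T}) (k : nat)
  : Prop :=
  forall F1 F2 : {set T}, F1 \subset N -> F2 \subset N ->
    #|F1| <= k -> #|F2| <= k -> F1 :&: S != F2 :&: S ->
    distinguishable P F1 F2.

Definition Omega (N : {set T}) (P : seq T -> Prop) (S : {set T}) : nat :=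
  \max_(k < #|N|.+1 | `[< k_identifiable N P S k >]) k.

End Network.

(* Main.v *)
Require Import Defs.
From mathcomp Require Import all_boot.
From mathcomp Require Import boolp.

Section Aux.
Variable T : finType.
Variables (N : {set T}) (P : seq T -> Prop).

Lemma ident_mono (S : {set T}) j k : j <= k -> k_identifiable N P S k -> k_identifiable N P S j.
Proof.
move=> jk H F1 F2 h1 h2 c1 c2 ne; apply: H => //; exact: leq_trans jk.
Qed.

Lemma ident0 (S : {set T}) : k_identifiable N P S 0.
Proof.
move=> F1 F2 _ _; rewrite !leqn0 !cards_eq0 => /eqP -> /eqP ->.
by rewrite eqxx.
Qed.

Lemma le_Omega (S : {set T}) k :
  k <= Omega N P S <-> k <= #|N| /\ k_identifiable N P S k.
Proof.
split.
- rewrite /Omega (bigmax_eq_arg (@ord0 #|N|)); last by apply/asboolP; exact: ident0.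
  case: arg_maxnP; first by apply/asboolP; exact: ident0.
  move=> j /asboolP Hj _ kj; split.
    by apply: leq_trans kj _; rewrite -ltnS.
  exact: ident_mono Hj.
- move=> [kN Hk]. have kN' : k < #|N|.+1 by [].
  apply: (@bigmax_sup _ (Ordinal kN')) => //; exact/asboolP.
Qed.

Lemma ident_set (S : {set T}) k :
  k_identifiable N P S k <-> forall v, v \in S -> k_identifiable N P [set v] k.
Proof.
split.
- move=> H v vS F1 F2 h1 h2 c1 c2 ne; apply: H => //.
  apply: contra ne => /eqP E; apply/eqP/setP => x; rewrite !inE.
  case: (boolP (x == v)) => [/eqP ->|]; rewrite ?andbT ?andbF //.
  by move: E => /setP /(_ v); rewrite !inE vS !andbT.
- move=> H F1 F2 h1 h2 c1 c2 ne.
  have [v] : exists v, (v \in F1 :&: S) != (v \in F2 :&: S).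
    apply/existsP; apply: contraR ne; rewrite negb_exists => /forallP A.
    by apply/eqP/setP => x; move: (A x); rewrite negbK => /eqP.
  rewrite !inE; case: (boolP (v \in S)) => vS; rewrite ?andbT ?andbF // => nv.
  apply: (H v vS) => //; apply: contra nv => /eqP /setP /(_ v).
  by rewrite !inE eqxx !andbT => ->.
Qed.

Lemma le_bigmin (S : {set T}) (f : T -> nat) n k :
  k <= \big[minn/n]_(v in S) f v <-> k <= n /\ forall v, v \in S -> k <= f v.
Proof.
split.
- move=> H; split.
    apply: leq_trans H _; elim/big_rec: _ => // i x _ h.
    by rewrite geq_min h orbT.
  move=> v vS; apply: leq_trans H _; rewrite -big_filter; have : v \in [seq i <- index_enum T | i \in S] by rewrite mem_filter vS mem_index_enum.
    clear vS.
    elim: (filter _ _) => // a r IH; rewrite inE big_cons => /orP [/eqP ->|vr].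
      exact: geq_minl.
    by rewrite geq_min IH // orbT.
- move=> [kn kf]; apply: (big_ind (fun x => k <= x)) => //.
    by move=> x y hx hy; rewrite leq_min hx hy.
Qed.

End Aux.

Theorem proposition1 (T : finType) (e : rel T) (M : {set T})
    (P : seq T -> Prop) (S : {set T}) :
  symmetric e ->
  (forall x y : T, connect e x y) ->
  S \subset ~: M ->
  S != set0 ->
  Omega (~: M) P S = \big[minn/#|~: M|]_(v in S) Omega (~: M) P [set v].
Proof.
move=> _ _ _ _.
have key : forall k, k <= Omega (~: M) P S <->
  k <= \big[minn/#|~: M|]_(v in S) Omega (~: M) P [set v].
  move=> k; rewrite le_bigmin le_Omega ident_set; split.
  - move=> [kN H]; split => // v vS; apply/le_Omega; split => //; exact: H.
  - move=> [kN H]; split => // v vS; by case/le_Omega: (H v vS).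
apply/eqP; rewrite eqn_leq; apply/andP; split.
  by apply/key.
by apply/key.
Qed.
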